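(* For every $\delta>0$, every $k\ge 1$ and every $j\in\omega$ there is $N_0$ such that for every $N\ge N_0$ and every $j$ collections $\mathcal{A}_0,\dots,\mathcal{A}_{j-1}\subseteq\mathcal{P}(N)$, each $k$-large in $N$ and upward closed, there exists $Z\subseteq N$ with $|Z|<(1/k+\delta)N$ and $Z\in\bigcap_{j'<j}\mathcal{A}_{j'}$.
   Context: Identify $N$ with $\{0,\dots,N-1\}$. A collection $\mathcal{A}\subseteq\mathcal{P}(N)$ is $k$-large in $N$ if for every partition of $N$ into $k$ pieces $N_0,\dots,N_{k-1}$ there is $i<k$ with $N_i\in\mathcal{A}$. $\mathcal{A}$ is upward closed if $B\in\mathcal{A}$ and $B\subseteq A\subseteq N$ imply $A\in\mathcal{A}$. *)

(* Defs.v *)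
From HB Require Import structures.
From mathcomp Require Import all_boot all_order all_algebra.
From mathcomp Require Import reals.
Set Implicit Arguments. Unset Strict Implicit. Unset Printing Implicit Defensive.

(* A partition of N into k pieces N_0,...,N_{k-1} is given by a colouring
   c : 'I_N -> 'I_k, with N_i = [set x | c x == i] (pieces may be empty). *)

Definition k_large (N k : nat) (A : {set {set 'I_N}}) : Prop :=
  forall c : {ffun 'I_N -> 'I_k}, exists i : 'I_k, [set x | c x == i] \in A.

Definition upward_closed (N : nat) (A : {set {set 'I_N}}) : Prop :=
  forall B C : {set 'I_N}, B \in A -> B \subset C -> C \in A.

(* Main.v *)
Require Import Defs.
From HB Require Import structures.
From mathcomp Require Import all_boot all_order all_algebra.
From mathcomp Require Import reals.
From mathcomp Require Import ring lra.
Import Order.TTheory GRing.Theory Num.Theory.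
Set Implicit Arguments. Unset Strict Implicit. Unset Printing Implicit Defensive.
Local Open Scope ring_scope.

Lemma card_piece (T : eqType) (N : nat) (t : seq T) y x0 : size t = N ->
  #|[set x : 'I_N | nth x0 t x == y]| = count (pred1 y) t.
Proof.
move=> <-. rewrite -sum1_count (big_nth x0) big_mkord cardsE -sum1_card.
by apply: eq_bigl => i.
Qed.

Section S.
Variable R : realFieldType.
Variable p : nat.
Notation I := 'I_p.+1.
Notation k := (p.+1%:R : R).

Fixpoint S (n : nat) (f : seq I -> R) : R :=
  if n is n'.+1 then \sum_(a : I) S n' (fun t => f (a :: t)) else f [::].

Lemma S_ext n f g : (forall t, size t = n -> f t = g t) -> S n f = S n g.
Proof.
elim: n f g => [|n IH] f g H /=; first exact: H.
apply: eq_bigr => a _; apply: IH => t Ht; apply: H; by rewrite /= Ht.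
Qed.

Lemma S_le n f g : (forall t, size t = n -> f t <= g t) -> S n f <= S n g.
Proof.
elim: n f g => [|n IH] f g H /=; first exact: H.
apply: ler_sum => a _; apply: IH => t Ht; apply: H; by rewrite /= Ht.
Qed.

Lemma S_add n f g : S n (fun t => f t + g t) = S n f + S n g.
Proof.
elim: n f g => [|n IH] f g //=.
by rewrite -big_split /=; apply: eq_bigr => a _; rewrite IH.
Qed.

Lemma S_scale n c f : S n (fun t => c * f t) = c * S n f.
Proof.
elim: n f => [|n IH] f //=.
by rewrite mulr_sumr; apply: eq_bigr => a _; rewrite IH.
Qed.

Lemma S_const n c : S n (fun _ => c) = k ^+ n * c.
Proof.
elim: n => [|n IH] /=; first by rewrite mul1r.
rewrite (eq_bigr (fun _ => k ^+ n * c)); last by move=> a _; rewrite IH.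
by rewrite sumr_const card_ord exprS -mulrA mulr_natl.
Qed.

Lemma S_sum n (J : finType) (F : J -> seq I -> R) :
  S n (fun t => \sum_(i : J) F i t) = \sum_(i : J) S n (F i).
Proof.
elim: n F => [|n IH] F //=.
rewrite exchange_big /=; apply: eq_bigr => a _; exact: IH.
Qed.

Lemma S_ge0 n f : (forall t, 0 <= f t) -> 0 <= S n f.
Proof.
move=> H; rewrite -(mulr0 (k ^+ n)) -S_const; apply: S_le => t _; exact: H.
Qed.

Lemma S_pos n f : 0 < S n f -> exists t, size t = n /\ 0 < f t.
Proof.
elim: n f => [|n IH] f /=; first by move=> h; exists [::].
move=> h; case: (boolP [exists a, 0 < S n (fun t => f (a :: t))]).
  move/existsP=> [a /IH [t [Ht Hf]]]; by exists (a :: t); rewrite /= Ht.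
move=> /existsPn H; exfalso; move: h; apply/negP; rewrite -leNgt.
apply: sumr_le0 => a _; by rewrite leNgt H.
Qed.

Lemma S_map n (s : I -> I) f : injective s -> S n (fun t => f (map s t)) = S n f.
Proof.
move=> hs; elim: n f => [|n IH] f //=.
rewrite [RHS](reindex_inj hs) /=; apply: eq_bigr => a _.
exact: (IH (fun t => f (s a :: t))).
Qed.


Definition mono (f : seq I -> R) := forall t t',
  (forall x, nth ord0 t x == ord0 -> nth ord0 t' x == ord0) -> f t <= f t'.

Lemma mono_sec f a : mono f -> mono (fun t => f (a :: t)).
Proof. move=> hf t t' H; apply: hf => -[|x] //=; exact: H. Qed.

Lemma mono_head f a b t : mono f -> (a == ord0 -> b == ord0) -> f (a :: t) <= f (b :: t).
Proof. move=> hf hab; apply: hf => -[|x] //=. Qed.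

Lemma cheb (A B : I -> R) : (forall a b, 0 <= (A a - A b) * (B a - B b)) ->
  (\sum_a A a) * (\sum_a B a) <= k * \sum_a A a * B a.
Proof.
move=> H.
have E : \sum_a \sum_b (A a - A b) * (B a - B b) =
   2%:R * (k * \sum_a A a * B a) - 2%:R * ((\sum_a A a) * (\sum_a B a)).
  have E1 : forall a, \sum_b (A a - A b) * (B a - B b) =
     k * (A a * B a) - A a * (\sum_b B b) - B a * (\sum_b A b) + \sum_b A b * B b.
    move=> a.
    rewrite (eq_bigr (fun b => A a * B a - A a * B b - B a * A b + A b * B b)); last first.
      move=> b _; ring.
    rewrite !big_split /= !sumrN sumr_const card_ord -!mulr_sumr.
    ring.
  rewrite (eq_bigr _ (fun a _ => E1 a)) !big_split /= !sumrN -!mulr_sumr.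
  rewrite -!mulr_suml sumr_const card_ord.
  ring.
have : 0 <= \sum_a \sum_b (A a - A b) * (B a - B b).
  apply: sumr_ge0 => a _; apply: sumr_ge0 => b _; exact: H.
rewrite E; lra.
Qed.

Lemma harris n f g : mono f -> mono g -> S n f * S n g <= k ^+ n * S n (fun t => f t * g t).
Proof.
elim: n f g => [|n IH] f g hf hg /=; first by rewrite expr0 mul1r.
apply: le_trans (cheb _) _.
  move=> a b.
  have [hab|hab] : (b == ord0 -> a == ord0) \/ (a == ord0 -> b == ord0).
    by case: (a == ord0); case: (b == ord0); auto.
  - apply: mulr_ge0; rewrite subr_ge0; apply: S_le => t _; exact: mono_head.
  - apply: mulr_le0; rewrite subr_le0; apply: S_le => t _; exact: mono_head.
rewrite exprS -mulrA ler_wpM2l // ?ler0n // mulr_sumr.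
apply: ler_sum => a _; apply: IH; exact: mono_sec.
Qed.


Lemma prod_mono (J : Type) (F : J -> seq I -> R) (s : seq J) :
 (forall i, mono (F i)) -> (forall i t, 0 <= F i t) ->
 mono (fun t => \prod_(i <- s) F i t) /\ forall t, 0 <= \prod_(i <- s) F i t.
Proof.
move=> hm hp; elim: s => [|i s [IHm IHp]].
  by split=> [t t' _|t]; rewrite !big_nil.
split=> [t t' H|t]; rewrite !big_cons; last exact: mulr_ge0.
apply: ler_pM => //; [exact: hm | exact: IHm].
Qed.

Lemma harris_prod n (J : Type) (F : J -> seq I -> R) (s : seq J) :
 (forall i, mono (F i)) -> (forall i t, 0 <= F i t) ->
 (\prod_(i <- s) S n (F i)) * k ^+ n <=
   (k ^+ n) ^+ (size s) * S n (fun t => \prod_(i <- s) F i t).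
Proof.
move=> hm hp; elim: s => [|i s IH].
  rewrite big_nil /= expr0 !mul1r.
  by rewrite (S_ext (g := fun _ => 1)) ?S_const ?mulr1 // => t _; rewrite big_nil.
have [Pm Pp] := prod_mono s hm hp.
rewrite big_cons /= -mulrA.
apply: le_trans (_ : S n (F i) * ((k ^+ n) ^+ size s * S n (fun t => \prod_(j <- s) F j t)) <= _).
  by apply: ler_wpM2l => //; apply: S_ge0.
rewrite mulrCA exprSr -mulrA; apply: ler_wpM2l; first by rewrite !exprn_ge0 // ler0n.
rewrite (S_ext (f := fun t => \prod_(j <- i :: s) F j t) (g := fun t => F i t * \prod_(j <- s) F j t)); last by move=> t _; rewrite big_cons.
exact: harris.
Qed.

Definition cnt (t : seq I) : nat := count (pred1 ord0) t.

Lemma sum_ind : \sum_(a : I) ((a == ord0)%:R : R) = 1.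
Proof. rewrite (bigD1 ord0) //= big1 => [|a /negbTE -> //]. exact: addr0. Qed.

Lemma var n : S n (fun t => (k * (cnt t)%:R - n%:R) ^+ 2) <= n%:R * k ^+ n.+1.
Proof.
elim: n => [|n IH] /=; first by rewrite /cnt /= mulr0 subr0 expr0n /= mul0r.
set V := S n _ in IH.
set X := S n (fun t => k * (cnt t)%:R - n%:R).
have E : forall a : I, S n (fun t => (k * (cnt (a :: t))%:R - n.+1%:R) ^+ 2) =
   ((k ^+ 2 - 2%:R * k) * (a == ord0)%:R + 1) * (k ^+ n) +
   (2%:R * (k * (a == ord0)%:R - 1)) * X + V.
  move=> a.
  rewrite (S_ext (g := fun t => ((k ^+ 2 - 2%:R * k) * (a == ord0)%:R + 1) * 1 +
     (2%:R * (k * (a == ord0)%:R - 1)) * (k * (cnt t)%:R - n%:R) +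
     (k * (cnt t)%:R - n%:R) ^+ 2)); last first.
    move=> t _; rewrite /cnt /= natrD -[n.+1]addn1 natrD.
    case: (a == ord0) => /=; ring.
  by rewrite !S_add !S_scale S_const mulr1 mulrC.
rewrite (eq_bigr _ (fun a _ => E a)) !big_split /= -!mulr_suml -!mulr_sumr.
rewrite !big_split /= -!mulr_sumr sum_ind !sumr_const card_ord.
have hk : 1 <= k by rewrite ler1n.
have hk0 : 0 <= k by rewrite ler0n.
rewrite !exprS expr0 !mulr1.
set K := k ^+ n in IH *.
have hK : 0 <= K by apply: exprn_ge0.
have h1 : V *+ p.+1 = k * V by rewrite mulr_natl.
have h6 : (-1 : R) *+ p.+1 = - k by rewrite mulNrn.
rewrite h1 h6 -[n.+1]addn1 natrD.
rewrite exprS -/K in IH.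
have h3 : k * V <= k * (n%:R * (k * K)) by rewrite ler_wpM2l.
have h5 : 0 <= k * K by rewrite mulr_ge0.
have h7 : 0 <= k * (k * K) by rewrite mulr_ge0.
nra.
Qed.
End S.

Definition sw (p : nat) (i a : 'I_p.+1) : 'I_p.+1 :=
  if a == ord0 then i else if a == i then ord0 else a.

Lemma swK p i : involutive (@sw p i).
Proof.
move=> a; rewrite /sw.
case: (eqVneq a ord0) => [->|h0]; first by rewrite eqxx; case: (eqVneq i ord0) => [->|hi]; rewrite ?eqxx // (negbTE hi).
case: (eqVneq a i) => [->|hi]; first by rewrite eqxx; case: (eqVneq i ord0) => [->|]; rewrite ?eqxx.
by rewrite (negbTE h0) (negbTE hi).
Qed.

Lemma sw0 p i a : (@sw p i a == ord0) = (a == i).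
Proof.
rewrite /sw; case: (eqVneq a ord0) => [->|h0].
  by rewrite eq_sym.
case: (eqVneq a i) => [e|hi]; first by subst a; rewrite eqxx.
by apply/negbTE.
Qed.

Local Close Scope ring_scope.
Unset Implicit Arguments.
Set Strict Implicit.

Theorem corollary2p10 (R : realType) (delta : R) (k j : nat) :
  (0 < delta)%R -> 1 <= k ->
  exists N0 : nat, forall N : nat, N0 <= N ->
    forall A : 'I_j -> {set {set 'I_N}},
      (forall j' : 'I_j, k_large k (A j') /\ upward_closed (A j')) ->
      exists Z : {set 'I_N},
        ((#|Z|%:R : R) < ((k%:R)^-1 + delta) * N%:R)%R /\
        (forall j' : 'I_j, Z \in A j').
Proof.
Local Open Scope ring_scope.
move=> hd; case: k => [//|p] _.
set k := (p.+1%:R : R).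
have hk1 : 1 <= k by rewrite ler1n.
have hk0 : 0 < k by rewrite ltr0n.
have hb : 0 <= k ^+ j / delta ^+ 2 by rewrite divr_ge0 // exprn_ge0 // ltW.
exists (Num.Def.archi_bound (k ^+ j / delta ^+ 2)).+1 => N hN A hA.
have hNB : k ^+ j < delta ^+ 2 * N%:R.
  have h1 := archi_boundP hb.
  have h2 : ((Num.Def.archi_bound (k ^+ j / delta ^+ 2))%:R : R) <= N%:R by rewrite ler_nat ltnW.
  have := lt_le_trans h1 h2.
  by rewrite ltr_pdivrMr ?exprn_gt0 // mulrC.
have hN1 : (1 <= N)%N by apply: leq_trans hN.
pose f (i : 'I_j) (t : seq 'I_p.+1) : R := (([set x : 'I_N | nth ord0 t x == ord0] \in A i) : nat)%:R.
pose bad (t : seq 'I_p.+1) : R := if ((cnt t)%:R < (k^-1 + delta) * N%:R) then 0 else 1.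
pose P (t : seq 'I_p.+1) : R := \prod_(i <- index_enum 'I_j) f i t.
have fm : forall i, mono (f i).
  move=> i t t' H; rewrite /f.
  case: (boolP ([set x : 'I_N | nth ord0 t x == ord0] \in A i)) => h; last by rewrite ler0n.
  have -> : [set x : 'I_N | nth ord0 t' x == ord0] \in A i.
    apply: (proj2 (hA i)) h _; apply/subsetP => x; rewrite !inE; exact: H.
  by [].
have fp : forall i t, 0 <= f i t by move=> i t; rewrite ler0n.
have f1 : forall i t, f i t <= 1 by move=> i t; rewrite /f; case: (_ \in _).
have S1 : forall i, k ^+ N <= k * S N (f i).
  move=> i.
  pose g (a : 'I_p.+1) (t : seq 'I_p.+1) : R := (([set x : 'I_N | nth ord0 t x == a] \in A i) : nat)%:R.
  have gE : forall a, S N (g a) = S N (f i).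
    move=> a; rewrite -(@S_map R p N (sw a) (f i) (can_inj (@swK p a))).
    apply: S_ext => t Ht; rewrite /f /g.
    have -> : [set x : 'I_N | nth ord0 [seq sw a i | i <- t] x == ord0] = [set x : 'I_N | nth ord0 t x == a].
      by apply/setP => x; rewrite !inE (nth_map ord0) ?Ht ?ltn_ord // sw0.
    by [].
  have := @S_le R p N (fun _ => 1) (fun t => \sum_a g a t).
  rewrite S_const mulr1 S_sum (eq_bigr _ (fun a _ => gE a)) sumr_const card_ord mulr_natl.
  apply => t Ht.
  have [a ha] := (proj1 (hA i)) [ffun x : 'I_N => nth ord0 t x].
  rewrite (bigD1 a) //= -[1]addr0; apply: lerD.
    rewrite /g; have -> : [set x : 'I_N | nth ord0 t x == a] = [set x | [ffun x : 'I_N => nth ord0 t x] x == a].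
      by apply/setP => x; rewrite !inE ffunE.
    by rewrite ha.
  by apply: sumr_ge0 => b _; rewrite ler0n.
have hKN : 0 < k ^+ N by apply: exprn_gt0.
have hKj : 0 < k ^+ j by apply: exprn_gt0.
have SP : k ^+ N <= k ^+ j * S N P.
  have h := harris_prod N (index_enum 'I_j) fm fp.
  have sz : size (index_enum 'I_j) = j by rewrite -[RHS](card_ord j) cardE enumT.
  rewrite sz in h.
  have lb : (k^-1 * k ^+ N) ^+ j <= \prod_(i <- index_enum 'I_j) S N (f i).
    have <- : \prod_(i < j) (k^-1 * k ^+ N) = (k^-1 * k ^+ N) ^+ j by rewrite prodr_const card_ord.
    apply: ler_prod => i _; apply/andP; split.
      by rewrite mulr_ge0 // ?invr_ge0 ltW.
    by rewrite ler_pdivrMl.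
  have h2 : (k ^+ N) ^+ j * (k^-1 ^+ j * k ^+ N) <= (k ^+ N) ^+ j * S N P.
    apply: le_trans h; rewrite mulrA -exprMn mulrC.
    rewrite mulrC [k ^+ N / k]mulrC; apply: ler_wpM2r; [exact: ltW | exact: lb].
  rewrite ler_pM2l ?exprn_gt0 // in h2.
  by move: h2; rewrite exprVn ler_pdivrMl ?exprn_gt0.
have Sb : S N bad * (k * delta * N%:R) ^+ 2 <= N%:R * k ^+ N.+1.
  rewrite mulrC -S_scale; apply: le_trans (var R p N); apply: S_le => t Ht.
  rewrite /bad; case: ifP => h; first by rewrite mulr0 sqr_ge0.
  rewrite mulr1.
  have h' : (k^-1 + delta) * N%:R <= (cnt t)%:R by rewrite leNgt h.
  have h'' : k * delta * N%:R <= k * (cnt t)%:R - N%:R.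
    have : k * ((k^-1 + delta) * N%:R) <= k * (cnt t)%:R by rewrite ler_wpM2l // ltW.
    rewrite mulrA mulrDr mulfV ?gt_eqF //; lra.
  rewrite !expr2; apply: ler_pM => //; by rewrite !mulr_ge0 ?ler0n // ltW.
have Sb0 : 0 <= S N bad by apply: S_ge0 => t; rewrite /bad; case: ifP.
have SPb : S N bad < S N P.
  set KN := k ^+ N in hKN SP Sb; set Kj := k ^+ j in hKj SP hNB.
  set SP' := S N P in SP *; set SB := S N bad in Sb Sb0 *.
  have hNr : 1 <= (N%:R : R) by rewrite ler1n.
  have hSP : 0 < SP'.
    rewrite lt_def; apply/andP; split; last first.
      by apply: S_ge0 => t; apply: prodr_ge0 => i _.
    apply/eqP => e; move: SP; rewrite e mulr0 => /(lt_le_trans hKN); by rewrite ltxx.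
  have eD : (k * delta * N%:R) ^+ 2 = (k ^+ 2 * N%:R) * (delta ^+ 2 * N%:R) by ring.
  have ea : 0 < SP' * (k ^+ 2 * N%:R) by rewrite !mulr_gt0 // ?exprn_gt0 // (lt_le_trans ltr01 hNr).
  have a : SP' * (k ^+ 2 * N%:R) * Kj < SP' * (k ^+ 2 * N%:R) * (delta ^+ 2 * N%:R).
    by rewrite ltr_pM2l.
  have b : KN * (k ^+ 2 * N%:R) <= Kj * SP' * (k ^+ 2 * N%:R).
    by apply: ler_wpM2r => //; rewrite mulr_ge0 ?exprn_ge0 ?ler0n // ltW.
  have c : N%:R * (k * KN) <= KN * (k ^+ 2 * N%:R).
    have : k <= k ^+ 2 by rewrite expr2 ler_peMl // ltW.
    move=> hk2.
    have : KN * N%:R * k <= KN * N%:R * k ^+ 2.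
      by apply: ler_wpM2l => //; rewrite mulr_ge0 ?ler0n // ltW.
    have -> : N%:R * (k * KN) = KN * N%:R * k by ring.
    have -> : KN * (k ^+ 2 * N%:R) = KN * N%:R * k ^+ 2 by ring.
    by [].
  rewrite eD exprS in Sb.
  have : SB * ((k ^+ 2 * N%:R) * (delta ^+ 2 * N%:R)) < SP' * ((k ^+ 2 * N%:R) * (delta ^+ 2 * N%:R)).
    apply: le_lt_trans Sb _; rewrite exprS -/KN.
    apply: le_lt_trans c _; apply: le_lt_trans b _.
    have -> : Kj * SP' * (k ^+ 2 * N%:R) = SP' * (k ^+ 2 * N%:R) * Kj by ring.
    by move: a; rewrite -!mulrA.
  by rewrite ltr_pM2r // mulr_gt0 // ?mulr_gt0 ?exprn_gt0 ?(lt_le_trans ltr01 hNr).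
have P1 : forall t, 0 <= P t <= 1.
  move=> t; apply/andP; split; first by apply: prodr_ge0 => i _.
  by apply: prodr_ile1 => i _; rewrite fp f1.
have b01 : forall t, 0 <= bad t /\ bad t <= 1 by move=> t; rewrite /bad; case: ifP.
have pos : 0 < S N (fun t => P t * (1 - bad t)).
  have e : S N (fun t => P t * (1 - bad t)) + S N (fun t => P t * bad t) = S N P.
    by rewrite -S_add; apply: S_ext => t _; ring.
  have le : S N (fun t => P t * bad t) <= S N bad.
    apply: S_le => t _; have [h0 h1] := b01 t; have /andP[h2 h3] := P1 t.
    by rewrite ler_piMl.
  lra.
have [t [Ht Hpos]] := S_pos pos.
exists [set x : 'I_N | nth ord0 t x == ord0]; split.
  rewrite card_piece //; move: Hpos; rewrite /bad /cnt; case: ifP => // _.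
  by rewrite subrr mulr0 ltxx.
have HP : P t != 0.
  apply/eqP => e; move: Hpos; by rewrite e mul0r ltxx.
move: HP; rewrite /P prodf_seq_neq0 => /allP H j'.
have := H j' (mem_index_enum j'); rewrite /f /=.
by case: (_ \in _); rewrite //= eqxx.
Qed.
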